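(* For every integer $n\ge1$ and every $u\in V$, $\Pr(E_{3u})<\dfrac{36\,\zeta(3)}{\ln^{2}(n+1)}$, where $\zeta(3)=\sum_{i\ge1} i^{-3}$.
   Context: For an integer $n\ge1$, the $n$-octahedral graph $G'_n=(V,E')$ is the undirected graph with vertex set $V=\{u\in\mathbb{Z}^3:|u_1|+|u_2|+|u_3|=n\}$ and edge set $E'=\{\{v,w\}\subset V: v\neq w,\ |v_i-w_i|\le 1 \text{ for all } i=1,2,3\}$. For $u,v\in V$, $d_{uv}$ denotes the shortest-path distance in $G'_n$, and $Z_u=\left(\sum_{w\in V\setminus\{u\}} d_{uw}^{-2}\right)^{-1}$. The OSW random graph $G_n=(V,E)$ is the directed graph in which, for every $\{u,v\}\in E'$, both $(u,v),(v,u)\in E$, and in addition each vertex $u\in V$, independently of the others, chooses one vertex $v\in V\setminus\{u\}$ with probability $Z_u d_{uv}^{-2}$ and the long-range edge $(u,v)$ is added; $C_{uv}$ denotes the event that $u$ chooses $v$. For an ordered pair $(x,y)$ of distinct vertices, say $(x,y)$ is of type $s$ if $\{x,y\}\in E'$, and of type $w$ if $d_{xy}\ge2$ and $C_{xy}$ occurs. A C3 rooted at $u$ of type $(t_1,t_2,t_3)\in\{s,w\}^3$ is a triple $(u,a,b)$ of pairwise distinct vertices such that $(u,a)$ is of type $t_1$, $(a,b)$ is of type $t_2$ and $(b,u)$ is of type $t_3$. $E_{3u}$ is the event that there exists a C3 rooted at $u$ of type $(s,w,w)$. *)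

(* Defs.v *)
From Stdlib Require Import ZArith Reals.
From mathcomp Require Import all_boot.
Set Implicit Arguments. Unset Strict Implicit. Unset Printing Implicit Defensive.

(* Points of the cube {-n..n}^3, encoded by ordinals i <-> i - n. *)
Definition cube (n : nat) : finType :=
  ('I_(n.*2.+1) * 'I_(n.*2.+1) * 'I_(n.*2.+1))%type.

Definition coordZ (n : nat) (i : 'I_(n.*2.+1)) : Z := (Z.of_nat i - Z.of_nat n)%Z.

Definition c1 n (x : cube n) : Z := coordZ x.1.1.
Definition c2 n (x : cube n) : Z := coordZ x.1.2.
Definition c3 n (x : cube n) : Z := coordZ x.2.

Definition onV n (x : cube n) : bool :=
  Z.eqb (Z.abs (c1 x) + Z.abs (c2 x) + Z.abs (c3 x))%Z (Z.of_nat n).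

Definition V (n : nat) : finType := {x : cube n | onV x}.

Definition adj n (v w : V n) : bool :=
  (v != w) &&
  [&& Z.leb (Z.abs (c1 (val v) - c1 (val w))) 1,
      Z.leb (Z.abs (c2 (val v) - c2 (val w))) 1 &
      Z.leb (Z.abs (c3 (val v) - c3 (val w))) 1].

Fixpoint reach n (k : nat) (u v : V n) : bool :=
  match k with
  | 0 => u == v
  | k.+1 => reach k u v || [exists w, reach k u w && adj w v]
  end.

(* Shortest-path distance d_uv: least k with reach k u v
   (G'_n is connected, so such k < #|V n| exists). *)
Definition dist n (u v : V n) : nat := find (fun k => reach k u v) (iota 0 #|V n|).

Definition Zu n (u : V n) : R :=
  Rinv (\big[Rplus/R0]_(w : V n | w != u) Rinv (pow (INR (dist u w)) 2)).

Definition pchoose n (u v : V n) : R :=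
  if v == u then R0 else Rmult (Zu u) (Rinv (pow (INR (dist u v)) 2)).

(* Sample space: choice functions c : V -> V (c x = the vertex chosen by x);
   product (independent) probability weight. *)
Definition weight n (c : {ffun V n -> V n}) : R :=
  \big[Rmult/R1]_(x : V n) pchoose x (c x).

Definition Pr n (A : pred {ffun V n -> V n}) : R :=
  \big[Rplus/R0]_(c : {ffun V n -> V n} | A c) weight c.

Definition type_s n (x y : V n) : bool := adj x y.
Definition type_w n (c : {ffun V n -> V n}) (x y : V n) : bool :=
  (x != y) && (2 <= dist x y) && (c x == y).

Definition E3 n (u : V n) : pred {ffun V n -> V n} :=
  fun c => [exists a : V n, exists b : V n,
    [&& u != a, a != b, b != u, type_s u a, type_w c a b & type_w c b u]].

Definition zeta3_is (z : R) : Prop :=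
  Un_cv (fun N => sum_f_R0 (fun i => Rinv (pow (INR i.+1) 3)) N) z.

(* Main.v *)
Require Import Defs.
From Stdlib Require Import ZArith Reals Lra Lia.
From mathcomp Require Import all_boot.
From mathcomp Require Import Rstruct zify.
Set Implicit Arguments. Unset Strict Implicit. Unset Printing Implicit Defensive.
Local Open Scope R_scope.

Lemma coordZ_bnd n (i : 'I_(n.*2.+1)) : (- Z.of_nat n <= coordZ i <= Z.of_nat n)%Z.
Proof. rewrite /coordZ; have := ltn_ord i; lia. Qed.

Lemma coordZ_inj n (i j : 'I_(n.*2.+1)) : coordZ i = coordZ j -> i = j.
Proof. rewrite /coordZ => h; apply: val_inj => /=; lia. Qed.

Definition mkpt n (c : Z) : 'I_(n.*2.+1) := inord (Z.to_nat (c + Z.of_nat n)).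

Lemma coordZ_mkpt n c : (- Z.of_nat n <= c <= Z.of_nat n)%Z -> coordZ (@mkpt n c) = c.
Proof.
move=> hc; rewrite /coordZ /mkpt inordK; first lia.
have : (Z.to_nat (c + Z.of_nat n) <= n.*2)%N by lia.
by rewrite ltnS.
Qed.

Definition mkV n (v0 : V n) (a b c : Z) : V n :=
  insubd v0 ((@mkpt n a, @mkpt n b), @mkpt n c).

Definition X1 n (v : V n) := Defs.c1 (val v).
Definition X2 n (v : V n) := c2 (val v).
Definition X3 n (v : V n) := c3 (val v).

Lemma onV_X n (v : V n) : (Z.abs (X1 v) + Z.abs (X2 v) + Z.abs (X3 v) = Z.of_nat n)%Z.
Proof. by have := valP v; rewrite /onV => /Z.eqb_eq. Qed.

Lemma X_bnd n (v : V n) :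
  [/\ (- Z.of_nat n <= X1 v <= Z.of_nat n)%Z, (- Z.of_nat n <= X2 v <= Z.of_nat n)%Z
    & (- Z.of_nat n <= X3 v <= Z.of_nat n)%Z].
Proof. by split; apply: coordZ_bnd. Qed.

Lemma mkV_X n (v0 : V n) a b c :
  (Z.abs a + Z.abs b + Z.abs c = Z.of_nat n)%Z ->
  [/\ X1 (mkV v0 a b c) = a, X2 (mkV v0 a b c) = b & X3 (mkV v0 a b c) = c].
Proof.
move=> h.
have ha : (- Z.of_nat n <= a <= Z.of_nat n)%Z by lia.
have hb : (- Z.of_nat n <= b <= Z.of_nat n)%Z by lia.
have hc : (- Z.of_nat n <= c <= Z.of_nat n)%Z by lia.
have hon : onV ((@mkpt n a, @mkpt n b), @mkpt n c).
  by rewrite /onV /Defs.c1 /c2 /c3 /= !coordZ_mkpt //; apply/Z.eqb_eq.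
rewrite /X1 /X2 /X3 /mkV insubdK //.
by rewrite /Defs.c1 /c2 /c3 /= !coordZ_mkpt.
Qed.

Lemma V_eq n (v w : V n) : X1 v = X1 w -> X2 v = X2 w -> X3 v = X3 w -> v = w.
Proof.
rewrite /X1 /X2 /X3 /Defs.c1 /c2 /c3 => h1 h2 h3; apply: val_inj.
case: (val v) h1 h2 h3 => [[p q] r]; case: (val w) => [[p' q'] r'] /= h1 h2 h3.
by rewrite (coordZ_inj h1) (coordZ_inj h2) (coordZ_inj h3).
Qed.
Lemma adjP n (v w : V n) :
  adj v w <-> v <> w /\ (Z.abs (X1 v - X1 w) <= 1 /\ Z.abs (X2 v - X2 w) <= 1
                        /\ Z.abs (X3 v - X3 w) <= 1)%Z.
Proof.
rewrite /adj /X1 /X2 /X3; split.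
  case/andP=> /eqP hne /and3P [/Z.leb_le h1 /Z.leb_le h2 /Z.leb_le h3]; by [].
case=> hne [h1 [h2 h3]]; apply/andP; split; first by apply/eqP.
by apply/and3P; split; apply/Z.leb_le.
Qed.

Lemma adj_sym n (v w : V n) : adj v w -> adj w v.
Proof.
move/adjP=> [hne [h1 [h2 h3]]]; apply/adjP; split; first by move=> e; apply: hne.
lia.
Qed.

Lemma reach_Linf n k (u v : V n) : reach k u v ->
  (Z.abs (X1 u - X1 v) <= Z.of_nat k /\ Z.abs (X2 u - X2 v) <= Z.of_nat k
   /\ Z.abs (X3 u - X3 v) <= Z.of_nat k)%Z.
Proof.
elim: k v => [|k IH] v /=.
  by move/eqP=> <-; lia.
case/orP.
  by move/IH; lia.
case/existsP=> w /andP [/IH h /adjP [_ h']]; lia.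
Qed.

Lemma reach_step n k (u v w : V n) : reach k u v -> adj v w -> reach k.+1 u w.
Proof. by move=> h1 h2 /=; apply/orP; right; apply/existsP; exists v; rewrite h1. Qed.

Lemma reach0 n (u : V n) : reach 0 u u.
Proof. by rewrite /=. Qed.

Definition NV n := #|V n|.

Lemma dV_le n k (u v : V n) : reach k u v -> (k < NV n)%N -> (Defs.dist u v <= k)%N.
Proof.
move=> hr hk; rewrite /Defs.dist; case: leqP => // hlt.
have := before_find 0%N hlt; rewrite nth_iota // add0n hr //.
Qed.

Lemma dV_cases n (u v : V n) : (Defs.dist u v = NV n) \/ reach (Defs.dist u v) u v.
Proof.
rewrite /Defs.dist; set p := (fun k => reach k u v).
case: (ltnP (find p (iota 0 #|V n|)) (size (iota 0 #|V n|))) => h.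
  right; have := nth_find 0%N (eq_ind_r is_true h (has_find p _)).
  by rewrite nth_iota ?add0n //; rewrite size_iota in h.
left; apply/eqP; rewrite eqn_leq; rewrite size_iota in h; rewrite h andbT.
by have := find_size p (iota 0 #|V n|); rewrite size_iota.
Qed.

Lemma cardV n (v0 : V n) : (n.*2.+1 <= NV n)%N.
Proof.
pose f (i : 'I_(n.*2.+1)) := mkV v0 (coordZ i) (Z.of_nat n - Z.abs (coordZ i)) 0.
have finj : injective f.
  move=> i j hij; apply: coordZ_inj.
  have := coordZ_bnd i; have := coordZ_bnd j => hj hi.
  have [e1 _ _] := @mkV_X n v0 (coordZ i) (Z.of_nat n - Z.abs (coordZ i)) 0 ltac:(lia).
  have [e2 _ _] := @mkV_X n v0 (coordZ j) (Z.of_nat n - Z.abs (coordZ j)) 0 ltac:(lia).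
  by rewrite -e1 -e2; congr X1; exact: hij.
by have := leq_card f finj; rewrite card_ord.
Qed.

Lemma dV_ge n (u v : V n) :
  (Z.abs (X1 u - X1 v) <= Z.of_nat (Defs.dist u v) /\ Z.abs (X2 u - X2 v) <= Z.of_nat (Defs.dist u v)
   /\ Z.abs (X3 u - X3 v) <= Z.of_nat (Defs.dist u v))%Z.
Proof.
case: (dV_cases u v) => [->|]; last exact: reach_Linf.
have := cardV u; have [? ? ?] := X_bnd u; have [? ? ?] := X_bnd v.
move=> h; lia.
Qed.

Lemma dV_pos n (u v : V n) : u <> v -> (1 <= Defs.dist u v)%N.
Proof.
move=> hne; have := dV_ge u v.
case: (Z.eq_dec (X1 u) (X1 v)) => [e1|]; last lia.
case: (Z.eq_dec (X2 u) (X2 v)) => [e2|]; last lia.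
case: (Z.eq_dec (X3 u) (X3 v)) => [e3|]; last lia.
by case: hne; apply: V_eq.
Qed.

Definition cpt (a b : Z) : Prop := ((0 <= a /\ 0 <= b) \/ (a <= 0 /\ b <= 0))%Z.

Lemma nstep a1 a2 a3 b1 b2 b3 :
  (0 <= a1 -> 0 <= a2 -> 0 <= a3 -> 0 <= b1 -> 0 <= b2 -> 0 <= b3 ->
  a1 + a2 + a3 = b1 + b2 + b3 ->
  0 < Z.abs (a1 - b1) + Z.abs (a2 - b2) + Z.abs (a3 - b3) ->
  exists c1 c2 c3, 0 <= c1 /\ 0 <= c2 /\ 0 <= c3 /\ c1 + c2 + c3 = b1 + b2 + b3 /\
   Z.abs (c1 - b1) <= 1 /\ Z.abs (c2 - b2) <= 1 /\ Z.abs (c3 - b3) <= 1 /\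
   Z.abs (a1 - c1) + Z.abs (a2 - c2) + Z.abs (a3 - c3) + 2 =
   Z.abs (a1 - b1) + Z.abs (a2 - b2) + Z.abs (a3 - b3))%Z.
Proof.
move=> ? ? ? ? ? ? hs hL.
have hA : (a1 < b1 \/ a2 < b2 \/ a3 < b3)%Z by lia.
have hB : (b1 < a1 \/ b2 < a2 \/ b3 < a3)%Z by lia.
case: hA => [h1|[h1|h1]]; case: hB => [g1|[g1|g1]]; try (exfalso; lia).
- exists (b1 - 1)%Z, (b2 + 1)%Z, b3; lia.
- exists (b1 - 1)%Z, b2, (b3 + 1)%Z; lia.
- exists (b1 + 1)%Z, (b2 - 1)%Z, b3; lia.
- exists b1, (b2 - 1)%Z, (b3 + 1)%Z; lia.
- exists (b1 + 1)%Z, b2, (b3 - 1)%Z; lia.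
- exists b1, (b2 + 1)%Z, (b3 - 1)%Z; lia.
Qed.

Definition sgn2 (p q : Z) : Z := if (Z.ltb p 0) || (Z.ltb q 0) then (-1)%Z else 1%Z.

Lemma coordfacts p q c : cpt p q -> (0 <= c)%Z ->
  (Z.abs (sgn2 p q * c) = c /\ Z.abs (p - q) = Z.abs (Z.abs p - Z.abs q) /\
   Z.abs (p - sgn2 p q * c) = Z.abs (Z.abs p - c) /\
   Z.abs (sgn2 p q * c - q) = Z.abs (c - Z.abs q) /\ cpt p (sgn2 p q * c))%Z.
Proof.
rewrite /cpt => h hc.
have : ((sgn2 p q = -1 /\ (p < 0 \/ q < 0)) \/ (sgn2 p q = 1 /\ 0 <= p /\ 0 <= q))%Z.
  rewrite /sgn2; case: (Z.ltb_spec p 0) => hp; case: (Z.ltb_spec q 0) => hq;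
  rewrite /=; [left|left|left|right]; lia.
case=> [[-> ?]|[-> ?]]; lia.
Qed.

Definition L1 (x1 x2 x3 w1 w2 w3 : Z) : Z :=
  (Z.abs (x1 - w1) + Z.abs (x2 - w2) + Z.abs (x3 - w3))%Z.

Definition L1V n (x w : V n) : Z := L1 (X1 x) (X2 x) (X3 x) (X1 w) (X2 w) (X3 w).

Lemma greedy n (x : V n) m : forall w : V n,
  cpt (X1 x) (X1 w) -> cpt (X2 x) (X2 w) -> cpt (X3 x) (X3 w) ->
  L1V x w = (2 * Z.of_nat m)%Z -> reach m x w.
Proof.
rewrite /L1V /L1; elim: m => [|m IH] w h1 h2 h3 hL.
  have -> : w = x by apply: V_eq; lia.
  exact: reach0.
have hx := onV_X x; have hw := onV_X w.
have [_ [f1 _]] := @coordfacts _ _ 0%Z h1 (Z.le_refl 0).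
have [_ [f2 _]] := @coordfacts _ _ 0%Z h2 (Z.le_refl 0).
have [_ [f3 _]] := @coordfacts _ _ 0%Z h3 (Z.le_refl 0).
rewrite f1 f2 f3 in hL; clear f1 f2 f3.
have hpos : (0 < Z.abs (Z.abs (X1 x) - Z.abs (X1 w)) + Z.abs (Z.abs (X2 x) - Z.abs (X2 w))
               + Z.abs (Z.abs (X3 x) - Z.abs (X3 w)))%Z.
  rewrite hL; lia.
have hs : (Z.abs (X1 x) + Z.abs (X2 x) + Z.abs (X3 x) = Z.abs (X1 w) + Z.abs (X2 w) + Z.abs (X3 w))%Z.
  by rewrite hx hw.
have [c1' [c2' [c3' [p1 [p2 [p3 [ps [q1 [q2 [q3 qL]]]]]]]]]] :=
  nstep (Z.abs_nonneg _) (Z.abs_nonneg _) (Z.abs_nonneg _) (Z.abs_nonneg _) (Z.abs_nonneg _)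
    (Z.abs_nonneg _) hs hpos.
have [k1 [_ [l1 [m1 n1]]]] := @coordfacts _ _ c1' h1 p1.
have [k2 [_ [l2 [m2 n2]]]] := @coordfacts _ _ c2' h2 p2.
have [k3 [_ [l3 [m3 n3]]]] := @coordfacts _ _ c3' h3 p3.
set y := mkV x (sgn2 (X1 x) (X1 w) * c1') (sgn2 (X2 x) (X2 w) * c2') (sgn2 (X3 x) (X3 w) * c3').
have [y1 y2 y3] : [/\ X1 y = (sgn2 (X1 x) (X1 w) * c1')%Z, X2 y = (sgn2 (X2 x) (X2 w) * c2')%Z
                  & X3 y = (sgn2 (X3 x) (X3 w) * c3')%Z].
  by apply: mkV_X; rewrite k1 k2 k3 ps hw.
apply: (@reach_step _ _ _ y).
  apply: IH; rewrite ?y1 ?y2 ?y3 //.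
  rewrite l1 l2 l3; clear - qL hL; lia.
apply/adjP; split.
  move=> eyw.
  have e1 : c1' = Z.abs (X1 w) by rewrite -eyw y1 k1.
  have e2 : c2' = Z.abs (X2 w) by rewrite -eyw y2 k2.
  have e3 : c3' = Z.abs (X3 w) by rewrite -eyw y3 k3.
  rewrite e1 e2 e3 in qL; clear - qL; lia.
by rewrite y1 y2 y3 m1 m2 m3.
Qed.

Lemma Rle_big (I : finType) (P : pred I) (F G : I -> R) :
  (forall i, P i -> F i <= G i) ->
  \big[Rplus/R0]_(i | P i) F i <= \big[Rplus/R0]_(i | P i) G i.
Proof.
move=> h; apply: (big_ind2 (fun a b => a <= b)) => //; first lra.
by move=> *; lra.
Qed.

Lemma big_ge0 (I : finType) (P : pred I) (F : I -> R) :
  (forall i, P i -> 0 <= F i) -> 0 <= \big[Rplus/R0]_(i | P i) F i.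
Proof.
move=> h; apply: (big_ind (fun a => 0 <= a)) => //; first lra.
by move=> *; lra.
Qed.

Lemma big_sub_le (I : finType) (P Q : pred I) (F : I -> R) :
  (forall i, Q i -> 0 <= F i) -> (forall i, P i -> Q i) ->
  \big[Rplus/R0]_(i | P i) F i <= \big[Rplus/R0]_(i | Q i) F i.
Proof.
move=> h0 hPQ; rewrite (bigID P Q) /=.
have -> : \big[Rplus/R0]_(i | Q i && P i) F i = \big[Rplus/R0]_(i | P i) F i.
  apply: eq_bigl => i; case hp: (P i); rewrite ?andbT ?andbF //.
  by rewrite hPQ.
have := @big_ge0 I (fun i => Q i && ~~ P i) F (fun i h => h0 i (proj1 (andP h))).
lra.
Qed.

Lemma big_ge_term (I : finType) (P : pred I) (F : I -> R) (j : I) :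
  (forall i, P i -> 0 <= F i) -> P j -> F j <= \big[Rplus/R0]_(i | P i) F i.
Proof.
move=> h0 hj; rewrite (bigD1 j) //=.
have := @big_ge0 I (fun i => P i && (i != j)) F (fun i h => h0 i (proj1 (andP h))).
lra.
Qed.

Lemma big_constR (I : finType) (P : pred I) (c : R) :
  \big[Rplus/R0]_(i | P i) c = INR #|[pred i | P i]| * c.
Proof.
have -> : \big[Rplus/R0]_(i | P i) c = \big[Rplus/R0]_(i in [pred i | P i]) c by [].
rewrite big_const; elim: #|_| => [|k IH] /=; first lra.
rewrite IH; case: k {IH} => [|k] /=; lra.
Qed.

Definition SS n (x : V n) : R :=
  \big[Rplus/R0]_(w : V n | w != x) Rinv (pow (INR (Defs.dist x w)) 2).

Lemma SS_ge0 n (x : V n) : 0 <= SS x.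
Proof.
apply: big_ge0 => w _.
case: (Req_dec (INR (Defs.dist x w) ^ 2) 0) => [->|h]; first by rewrite Rinv_0; lra.
apply: Rlt_le; apply: Rinv_0_lt_compat.
have := pow2_ge_0 (INR (Defs.dist x w)); lra.
Qed.

Lemma Rinv_ge0 (x : R) : 0 <= x -> 0 <= / x.
Proof.
move=> h; case: (Req_dec x 0) => [->|h']; first by rewrite Rinv_0; lra.
apply: Rlt_le; apply: Rinv_0_lt_compat; lra.
Qed.

Lemma Zu_ge0 n (x : V n) : 0 <= Zu x.
Proof. exact: Rinv_ge0 (SS_ge0 x). Qed.

Lemma pchoose_ge0 n (x y : V n) : 0 <= pchoose x y.
Proof.
rewrite /pchoose; case: eqP => _; first lra.
apply: Rmult_le_pos; first exact: Zu_ge0.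
apply: Rinv_ge0; apply: pow2_ge_0.
Qed.

Lemma rowsum n (x : V n) :
  0 <= \big[Rplus/R0]_(y : V n) pchoose x y <= 1.
Proof.
split; first by apply: big_ge0 => *; apply: pchoose_ge0.
rewrite (bigD1 x) //= /pchoose eqxx Rplus_0_l.
have -> : \big[Rplus/R0]_(i | i != x)
    (if i == x then R0 else Zu x * / INR (Defs.dist x i) ^ 2) =
    \big[Rplus/R0]_(i | i != x) (Zu x * / INR (Defs.dist x i) ^ 2).
  by apply: eq_bigr => i /negbTE ->.
rewrite -big_distrr /=.
change (Zu x * SS x <= 1).
rewrite /Zu -/(SS x).
case: (Req_dec (SS x) 0) => [->|h]; first by rewrite Rinv_0; lra.
rewrite Rinv_l //; lra.
Qed.

Lemma prod01 (I : finType) (P : pred I) (F : I -> R) :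
  (forall i, P i -> 0 <= F i <= 1) -> 0 <= \big[Rmult/R1]_(i | P i) F i <= 1.
Proof.
move=> h; apply: (big_ind (fun a => 0 <= a <= 1)) => //; first lra.
move=> a b ha hb; split; first by apply: Rmult_le_pos; lra.
have : a * b <= 1 * 1 by apply: Rmult_le_compat; lra.
lra.
Qed.

Lemma marg2 n (a b u : V n) : a != b ->
  \big[Rplus/R0]_(c : {ffun V n -> V n} | (c a == b) && (c b == u)) weight c
  <= pchoose a b * pchoose b u.
Proof.
move=> hab.
pose F (x y : V n) := if x == a then (if y == b then pchoose x y else R0)
                      else if x == b then (if y == u then pchoose x y else R0)
                      else pchoose x y.
have -> : \big[Rplus/R0]_(c : {ffun V n -> V n} | (c a == b) && (c b == u)) weight c
        = \big[Rplus/R0]_(c : {ffun V n -> V n}) \big[Rmult/R1]_(x : V n) F x (c x).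
  rewrite big_mkcond; apply: eq_bigr => c _; rewrite /weight.
  case: ifP => hc.
    apply: eq_bigr => x _; rewrite /F; case/andP: hc => /eqP hca /eqP hcb.
    case: eqP => [->|_]; first by rewrite hca eqxx.
    by case: eqP => [->|_] //; rewrite hcb eqxx.
  case/nandP: hc => hc.
    by rewrite (bigD1 a) //= /F eqxx (negbTE hc) Rmult_0_l.
  rewrite (bigD1 b) //= /F (negbTE hc) eq_sym (negbTE hab) eqxx Rmult_0_l //.
rewrite -(bigA_distr_bigA) (bigD1 a) //=.
rewrite (bigD1 b (P := fun x : V n => x != a)) /=; last by rewrite eq_sym.
have -> : \big[Rplus/R0]_(y : V n) F a y = pchoose a b.
  rewrite /F eqxx -big_mkcond /=; exact: big_pred1_eq.
have -> : \big[Rplus/R0]_(y : V n) F b y = pchoose b u.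
  rewrite /F eq_sym (negbTE hab) eqxx -big_mkcond /=; exact: big_pred1_eq.
have [h0 h1] : 0 <= \big[Rmult/R1]_(x | (x != a) && (x != b)) \big[Rplus/R0]_(y : V n) F x y <= 1.
  apply: prod01 => x /andP [h1 h2]; rewrite /F (negbTE h1) (negbTE h2); exact: rowsum.
have := pchoose_ge0 a b; have := pchoose_ge0 b u => p1 p2.
have : pchoose b u * \big[Rmult/R1]_(x | (x != a) && (x != b)) \big[Rplus/R0]_(y : V n) F x y
       <= pchoose b u * 1 by apply: Rmult_le_compat_l.
move=> h3.
have : pchoose a b * (pchoose b u * \big[Rmult/R1]_(x | (x != a) && (x != b)) \big[Rplus/R0]_(y : V n) F x y)
       <= pchoose a b * (pchoose b u * 1) by apply: Rmult_le_compat_l.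
move=> h4; rewrite Rmult_1_r in h4; exact: h4.
Qed.

Definition good n (u a b : V n) : bool :=
  [&& a != b, b != u, (2 <= Defs.dist a b)%N & (2 <= Defs.dist b u)%N].

Lemma weight_ge0 n (c : {ffun V n -> V n}) : 0 <= weight c.
Proof.
apply: (big_ind (fun x => 0 <= x)) => //; first lra.
  by move=> x y hx hy; apply: Rmult_le_pos.
by move=> x _; apply: pchoose_ge0.
Qed.

Lemma Pr_le n (u : V n) :
  Pr (E3 u) <= \big[Rplus/R0]_(a | adj u a) \big[Rplus/R0]_(b | good u a b)
                 (pchoose a b * pchoose b u).
Proof.
rewrite /Pr.
pose G (c : {ffun V n -> V n}) (a b : V n) :=
  if (c a == b) && (c b == u) then weight c else R0.
have Gge0 c a b : 0 <= G c a b.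
  by rewrite /G; case: ifP => _; [apply: weight_ge0 | lra].
have step1 : forall c, E3 u c ->
    weight c <= \big[Rplus/R0]_(a | adj u a) \big[Rplus/R0]_(b | good u a b) G c a b.
  move=> c /existsP [a /existsP [b]].
  case/andP=> _ /andP [hab /andP [hbu /andP [hua /andP [hw1 hw2]]]].
  move: hw1 hw2; rewrite /type_w => /andP [/andP [_ hd1] hca] /andP [/andP [_ hd2] hcb].
  have hG : G c a b = weight c by rewrite /G hca hcb.
  apply: (Rle_trans _ (\big[Rplus/R0]_(b0 | good u a b0) G c a b0)).
    rewrite -hG; apply: (big_ge_term (F := fun b0 => G c a b0) (j := b)) => //.
    by rewrite /good hab hbu hd1 hd2.
  apply: (big_ge_term (F := fun a0 => \big[Rplus/R0]_(b0 | good u a0 b0) G c a0 b0)) => //.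
  by move=> a0 _; apply: big_ge0 => *; apply: Gge0.
apply: (Rle_trans _ (\big[Rplus/R0]_(c | E3 u c)
   \big[Rplus/R0]_(a | adj u a) \big[Rplus/R0]_(b | good u a b) G c a b)).
  exact: Rle_big.
apply: (Rle_trans _ (\big[Rplus/R0]_(c : {ffun V n -> V n})
   \big[Rplus/R0]_(a | adj u a) \big[Rplus/R0]_(b | good u a b) G c a b)).
  apply: big_sub_le => // c _; apply: big_ge0 => a _; apply: big_ge0 => b _; exact: Gge0.
rewrite exchange_big /=; apply: Rle_big => a _.
rewrite exchange_big /=; apply: Rle_big => b.
rewrite /good => /andP [hab _].
rewrite /G -big_mkcond /=; exact: marg2.
Qed.

Definition bvec (f : nat) (a1 a2 a3 k s : Z) : Z * Z * Z :=
  match f with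
  | 0 => ((a1 - k)%Z, (a2 + s)%Z, (a3 + k - s)%Z)
  | 1 => ((a1 + s)%Z, (a2 - k)%Z, (a3 + k - s)%Z)
  | _ => ((a1 + s)%Z, (a2 + k - s)%Z, (a3 - k)%Z)
  end.

Definition afam (f : nat) (a1 a2 a3 : nat) : nat :=
  match f with 0 => a1 | 1 => a2 | _ => a3 end.

Lemma bfacts f a1 a2 a3 k s : (f < 3)%N -> (1 <= k)%N -> (k <= afam f a1 a2 a3)%N -> (s < k)%N ->
  let b := bvec f (Z.of_nat a1) (Z.of_nat a2) (Z.of_nat a3) (Z.of_nat k) (Z.of_nat s) in
  (0 <= b.1.1 /\ 0 <= b.1.2 /\ 0 <= b.2 /\
   b.1.1 + b.1.2 + b.2 = Z.of_nat a1 + Z.of_nat a2 + Z.of_nat a3 /\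
   Z.abs (Z.of_nat a1 - b.1.1) + Z.abs (Z.of_nat a2 - b.1.2) + Z.abs (Z.of_nat a3 - b.2)
   = Z.of_nat k + Z.of_nat k)%Z.
Proof.
case: f => [|[|[|f]]] //= _ h1 h2 h3 /=; lia.
Qed.

Lemma binj f f' a1 a2 a3 k s k' s' : (f < 3)%N -> (f' < 3)%N ->
  (1 <= k)%N -> (k <= afam f a1 a2 a3)%N -> (s < k)%N ->
  (1 <= k')%N -> (k' <= afam f' a1 a2 a3)%N -> (s' < k')%N ->
  bvec f (Z.of_nat a1) (Z.of_nat a2) (Z.of_nat a3) (Z.of_nat k) (Z.of_nat s) =
  bvec f' (Z.of_nat a1) (Z.of_nat a2) (Z.of_nat a3) (Z.of_nat k') (Z.of_nat s') ->
  f = f' /\ k = k' /\ s = s'.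
Proof.
case: f => [|[|[|f]]] //; case: f' => [|[|[|f']]] //= _ _ h1 h2 h3 h1' h2' h3' [e1 e2 e3]; lia.
Qed.

Definition aN1 n (x : V n) := Z.to_nat (Z.abs (X1 x)).
Definition aN2 n (x : V n) := Z.to_nat (Z.abs (X2 x)).
Definition aN3 n (x : V n) := Z.to_nat (Z.abs (X3 x)).

Lemma aN_facts n (x : V n) :
  Z.of_nat (aN1 x) = Z.abs (X1 x) /\ Z.of_nat (aN2 x) = Z.abs (X2 x) /\
  Z.of_nat (aN3 x) = Z.abs (X3 x) /\ (aN1 x + aN2 x + aN3 x = n)%N.
Proof. have := onV_X x; rewrite /aN1 /aN2 /aN3; lia. Qed.

Definition sgx (p : Z) := sgn2 p p.

Definition bofx n (x : V n) (t : 'I_3 * 'I_(n.+1) * 'I_(n.+1)) :=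
  bvec t.1.1 (Z.of_nat (aN1 x)) (Z.of_nat (aN2 x)) (Z.of_nat (aN3 x)) (Z.of_nat t.1.2) (Z.of_nat t.2).

Definition iotaV n (x : V n) (t : 'I_3 * 'I_(n.+1) * 'I_(n.+1)) : V n :=
  mkV x (sgx (X1 x) * (bofx x t).1.1) (sgx (X2 x) * (bofx x t).1.2) (sgx (X3 x) * (bofx x t).2).

Definition Dpred n (x : V n) : pred ('I_3 * 'I_(n.+1) * 'I_(n.+1)) :=
  fun t => [&& (1 <= t.1.2)%N, (t.1.2 <= afam t.1.1 (aN1 x) (aN2 x) (aN3 x))%N & (t.2 < t.1.2)%N].

Lemma cpp p : cpt p p.
Proof. rewrite /cpt; lia. Qed.

Lemma iota_X n (x : V n) t : Dpred x t ->
  [/\ X1 (iotaV x t) = (sgx (X1 x) * (bofx x t).1.1)%Z,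
      X2 (iotaV x t) = (sgx (X2 x) * (bofx x t).1.2)%Z &
      X3 (iotaV x t) = (sgx (X3 x) * (bofx x t).2)%Z].
Proof.
case/and3P => h1 h2 h3.
have [b1 [b2 [b3 [bs _]]]] := bfacts (ltn_ord t.1.1) h1 h2 h3.
have [e1 [e2 [e3 es]]] := aN_facts x.
have [k1 _] := @coordfacts _ _ _ (cpp (X1 x)) b1.
have [k2 _] := @coordfacts _ _ _ (cpp (X2 x)) b2.
have [k3 _] := @coordfacts _ _ _ (cpp (X3 x)) b3.
apply: mkV_X; rewrite /sgx k1 k2 k3 /bofx bs; lia.
Qed.

Lemma iota_good n (x : V n) t : Dpred x t ->
  (Defs.dist x (iotaV x t) <= t.1.2)%N /\ iotaV x t != x.
Proof.
move=> hD; have [y1 y2 y3] := iota_X hD.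
case/and3P: hD => h1 h2 h3.
have [b1 [b2 [b3 [bs bL]]]] := bfacts (ltn_ord t.1.1) h1 h2 h3.
have [e1 [e2 [e3 es]]] := aN_facts x.
have [k1 [_ [l1 [_ n1]]]] := @coordfacts _ _ _ (cpp (X1 x)) b1.
have [k2 [_ [l2 [_ n2]]]] := @coordfacts _ _ _ (cpp (X2 x)) b2.
have [k3 [_ [l3 [_ n3]]]] := @coordfacts _ _ _ (cpp (X3 x)) b3.
rewrite /sgx in y1 y2 y3.
have hL : L1V x (iotaV x t) = (2 * Z.of_nat t.1.2)%Z.
  rewrite /L1V /L1 y1 y2 y3 l1 l2 l3 -e1 -e2 -e3.
  rewrite /bofx in bL; clear - bL; lia.
split.
  apply: dV_le.
    apply: greedy => //; by rewrite ?y1 ?y2 ?y3.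
  have h4 := cardV x; have h5 := ltn_ord t.1.2; rewrite /NV.
  clear - h4 h5; rewrite /NV in h4; lia.
apply/eqP => e; move: hL; rewrite e /L1V /L1.
have := h1; clear; lia.
Qed.

Lemma iota_inj n (x : V n) : {in Dpred x &, injective (iotaV x)}.
Proof.
move=> t t' hD hD' e.
have [y1 y2 y3] := iota_X hD; have [y1' y2' y3'] := iota_X hD'.
have e1 : (sgx (X1 x) * (bofx x t).1.1 = sgx (X1 x) * (bofx x t').1.1)%Z by rewrite -y1 -y1' e.
have e2 : (sgx (X2 x) * (bofx x t).1.2 = sgx (X2 x) * (bofx x t').1.2)%Z by rewrite -y2 -y2' e.
have e3 : (sgx (X3 x) * (bofx x t).2 = sgx (X3 x) * (bofx x t').2)%Z by rewrite -y3 -y3' e.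
have sgne p : sgx p <> 0%Z by rewrite /sgx /sgn2; case: (_ || _).
have eb : bofx x t = bofx x t'.
  move: (bofx x t) (bofx x t') e1 e2 e3 => [[p1 p2] p3] [[q1 q2] q3] /= e1 e2 e3.
  by rewrite (Z.mul_reg_l _ _ _ (sgne _) e1) (Z.mul_reg_l _ _ _ (sgne _) e2)
             (Z.mul_reg_l _ _ _ (sgne _) e3).
case/and3P: hD => h1 h2 h3; case/and3P: hD' => h1' h2' h3'.
have [ef [ek es]] := binj (ltn_ord t.1.1) (ltn_ord t'.1.1) h1 h2 h3 h1' h2' h3' eb.
move: t t' ef ek es {e y1 y2 y3 y1' y2' y3' e1 e2 e3 eb h1 h2 h3 h1' h2' h3'}
  => [[f k] s] [[f' k'] s'] /= ef ek es.
by congr (_, _, _); apply: val_inj.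
Qed.

Lemma count_lt m k v : (k <= m)%N ->
  \big[Rplus/R0]_(s < m) (if (s < k)%N then v else R0) = INR k * v.
Proof.
elim: m k => [|m IH] k hk.
  move: hk; rewrite leqn0 => /eqP ->; rewrite big_ord0 /=; lra.
rewrite big_ord_recr /=.
case: (ltnP k m.+1) => hkm.
  rewrite (IH k hkm); lra.
have ekm : k = m.+1 by apply/eqP; rewrite eqn_leq hk hkm.
rewrite ekm.
have -> : \big[Rplus/R0]_(i < m) (if (widen_ord (leqnSn m) i < m.+1)%N then v else R0)
        = \big[Rplus/R0]_(i < m) (if (i < m)%N then v else R0).
  apply: eq_bigr => i _ /=; by rewrite (ltn_ord i) ltnS ltnW.
rewrite IH // S_INR; lra.
Qed.

Lemma ln_step (N : nat) : (1 <= N)%N -> ln (INR N.+1) <= ln (INR N) + / INR N.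
Proof.
move=> hN.
have hp : 0 < INR N by apply: lt_0_INR; apply/ltP.
have -> : INR N.+1 = INR N * (1 + / INR N) by rewrite S_INR; field; lra.
rewrite ln_mult //; last first.
  have := Rinv_0_lt_compat _ hp; lra.
have : ln (1 + / INR N) <= / INR N.
  have hi : / INR N <> 0 by apply: Rinv_neq_0_compat; lra.
  have := exp_ineq1 _ hi => h.
  rewrite -{2}(ln_exp (/ INR N)); apply: Rlt_le; apply: ln_increasing => //.
  have := Rinv_0_lt_compat _ hp; lra.
lra.
Qed.

Lemma harm_aux a N : (1 <= N)%N ->
  ln (INR (minn N a.+1)) <= \big[Rplus/R0]_(k < N) (if (1 <= k <= a)%N then / INR k else R0).
Proof.
elim: N => [|N IH] // hN.
rewrite big_ord_recr /=.
case: (posnP N) => hN0.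
  rewrite hN0 big_ord0; have -> : minn 1 a.+1 = 1%N by apply/minn_idPl.
  rewrite INR_1 ln_1 /=; lra.
have IH' := IH hN0.
have -> : \big[Rplus/R0]_(i < N) (if (1 <= widen_ord (leqnSn N) i <= a)%N then / INR (widen_ord (leqnSn N) i) else R0)
        = \big[Rplus/R0]_(i < N) (if (1 <= i <= a)%N then / INR i else R0) by [].
case: (leqP N a) => hNa.
  have -> : minn N.+1 a.+1 = N.+1 by apply/minn_idPl; rewrite ltnS.
  have e : minn N a.+1 = N by apply/minn_idPl; rewrite ltnW.
  rewrite e in IH'.
  rewrite ?hN0 ?hNa andbT; cbv iota.
  have := ln_step hN0; lra.
have -> : minn N.+1 a.+1 = a.+1 by apply/minn_idPr; rewrite ltnW.
have e : minn N a.+1 = a.+1 by apply/minn_idPr.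
rewrite e in IH'.
rewrite ?andbF; cbv iota; lra.
Qed.

Lemma harm a N : (a < N)%N ->
  ln (INR a + 1) <= \big[Rplus/R0]_(k < N) (if (1 <= k <= a)%N then / INR k else R0).
Proof.
move=> h.
have := @harm_aux a N (leq_trans (ltn0Sn a) h).
have -> : minn N a.+1 = a.+1 by apply/minn_idPr.
by rewrite S_INR.
Qed.

Lemma ln_le' x y : 0 < x -> x <= y -> ln x <= ln y.
Proof.
move=> hx [h|->]; last lra.
by apply: Rlt_le; apply: ln_increasing.
Qed.

Lemma ln_sum3 a1 a2 a3 :
  ln (INR (a1 + a2 + a3) + 1) <= ln (INR a1 + 1) + ln (INR a2 + 1) + ln (INR a3 + 1).
Proof.
have h1 := pos_INR a1; have h2 := pos_INR a2; have h3 := pos_INR a3.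
rewrite -!ln_mult; try nra.
have p12 := Rmult_le_pos _ _ h1 h2; have p13 := Rmult_le_pos _ _ h1 h3.
have p23 := Rmult_le_pos _ _ h2 h3; have p123 := Rmult_le_pos _ _ p12 h3.
apply: ln_le'; rewrite !plus_INR; [lra | nra].
Qed.

Lemma sum3 (G : 'I_3 -> R) :
  \big[Rplus/R0]_(f < 3) G f = G ord0 + G (@Ordinal 3 1 isT) + G (@Ordinal 3 2 isT).
Proof.
rewrite !big_ord_recr big_ord0 /=; rewrite Rplus_0_l.
by congr (_ + _ + _); congr G; apply: val_inj.
Qed.

Lemma inv_sq_le (d k : nat) : (1 <= d)%N -> (d <= k)%N -> / INR k ^ 2 <= / INR d ^ 2.
Proof.
move=> hd hk; apply: Rinv_le_contravar.
  apply: pow_lt; apply: lt_0_INR; apply/ltP; exact: hd.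
apply: pow_incr; split; first exact: pos_INR.
apply: le_INR; apply/leP; exact: hk.
Qed.

Lemma SS_lb n (x : V n) : ln (INR n + 1) <= SS x.
Proof.
apply: (Rle_trans _ (\big[Rplus/R0]_(w in [set iotaV x t | t in Dpred x])
                         Rinv (pow (INR (Defs.dist x w)) 2))).
  rewrite big_imset /=; last exact: iota_inj.
  apply: (Rle_trans _ (\big[Rplus/R0]_(t in Dpred x) Rinv (pow (INR t.1.2) 2))).
    rewrite big_mkcond /=.
    rewrite -[X in _ <= X](pair_bigA _ (fun p s => if (p, s) \in Dpred x then / INR (p, s).1.2 ^ 2 else R0)).
    rewrite -[X in _ <= X](pair_bigA _ (fun f k => \big[Rplus/R0]_(s < n.+1)
                 (if ((f, k), s) \in Dpred x then / INR k ^ 2 else R0))).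
    apply: (Rle_trans _ (\big[Rplus/R0]_(f < 3) \big[Rplus/R0]_(k < n.+1)
                 (if (1 <= k <= afam f (aN1 x) (aN2 x) (aN3 x))%N then / INR k else R0))).
      have [_ [_ [_ es]]] := aN_facts x.
      rewrite sum3 /=.
      have h1 := @harm (aN1 x) n.+1 ltac:(lia).
      have h2 := @harm (aN2 x) n.+1 ltac:(lia).
      have h3 := @harm (aN3 x) n.+1 ltac:(lia).
      have := ln_sum3 (aN1 x) (aN2 x) (aN3 x); rewrite es => h.
      apply: (Rle_trans _ _ _ h); apply: Rplus_le_compat; [apply: Rplus_le_compat|]; assumption.
    apply: (Rle_big (P := xpredT)) => f _; apply: (Rle_big (P := xpredT)) => k _.
    apply: Req_le.
    have -> : \big[Rplus/R0]_(s < n.+1) (if ((f, k), s) \in Dpred x then / INR k ^ 2 else R0)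
            = \big[Rplus/R0]_(s < n.+1) (if (1 <= k <= afam f (aN1 x) (aN2 x) (aN3 x))%N
                                          then (if (s < k)%N then / INR k ^ 2 else R0) else R0).
      apply: eq_bigr => s _; rewrite unfold_in /Dpred /=.
      by case: (1 <= k)%N; case: (k <= _)%N.
    case: ifP => hk; last by rewrite big1.
    rewrite count_lt; last by apply: ltnW.
    have hk0 : 0 < INR k by apply: lt_0_INR; case/andP: hk => /ltP.
    field; lra.
  apply: Rle_big => t ht.
  have [hd _] := iota_good ht.
  have hk1 : (1 <= t.1.2)%N by case/and3P: ht.
  have hd1 : (1 <= Defs.dist x (iotaV x t))%N.
    apply: (@dV_pos n x (iotaV x t)) => e; have [_ hne] := iota_good ht; by rewrite -e eqxx in hne.
  exact: inv_sq_le.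
apply: big_sub_le.
  move=> w _; apply: Rinv_ge0; apply: pow2_ge_0.
move=> w /imsetP [t ht ->]; have [_ hne] := iota_good ht; exact: hne.
Qed.

Lemma inj_sum_le (I J : finType) (A : pred I) (phi : I -> J) (h : J -> R) :
  (forall j, 0 <= h j) -> {in A &, injective phi} ->
  \big[Rplus/R0]_(i | A i) h (phi i) <= \big[Rplus/R0]_(j : J) h j.
Proof.
move=> h0 hinj.
have -> : \big[Rplus/R0]_(i | A i) h (phi i) = \big[Rplus/R0]_(i in A) h (phi i) by [].
rewrite -(big_imset h hinj) /=.
by apply: big_sub_le.
Qed.

Lemma INR_addn a b : INR (a + b)%N = INR a + INR b.
Proof. exact: plus_INR. Qed.
Lemma INR_muln a b : INR (a * b)%N = INR a * INR b.
Proof. exact: mult_INR. Qed.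
Lemma INR2 : INR 2 = 2.
Proof. simpl; lra. Qed.
Lemma INR3 : INR 3 = 3.
Proof. simpl; lra. Qed.

Definition hh (t : nat) : R := INR (2 * t + 1) * / INR (maxn 2 t) ^ 4.

Lemma hh_ge0 t : 0 <= hh t.
Proof.
rewrite /hh; apply: Rmult_le_pos; first exact: pos_INR.
apply: Rinv_ge0; apply: pow_le; exact: pos_INR.
Qed.

Lemma hh_step (M : nat) : hh (M + 3) <= / INR (M + 2) ^ 2 - / INR (M + 3) ^ 2.
Proof.
rewrite /hh.
have -> : maxn 2 (M + 3) = (M + 3)%N by apply/maxn_idPr; rewrite addnC.
have -> : INR (2 * (M + 3) + 1) = 2 * INR (M + 3) + 1.
  by rewrite INR_addn INR_muln INR2 INR_1.
have -> : INR (M + 2) = INR (M + 3) - 1 by rewrite !INR_addn INR2 INR3; lra.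
have hx : 3 <= INR (M + 3) by rewrite INR_addn INR3; have := pos_INR M; lra.
set x := INR (M + 3) in hx *.
have e : / (x - 1) ^ 2 - / x ^ 2 - (2 * x + 1) * / x ^ 4 = (2 * x ^ 2 - 1) * / (x ^ 4 * (x - 1) ^ 2).
  field; split; move=> ?; lra.
have : 0 <= (2 * x ^ 2 - 1) * / (x ^ 4 * (x - 1) ^ 2).
  apply: Rmult_le_pos; first nra.
  apply: Rinv_ge0; apply: Rmult_le_pos; apply: pow_le; lra.
lra.
Qed.

Lemma hh_tail3 (M : nat) :
  \big[Rplus/R0]_(t < M + 3) hh t <= 13 / 16 - / INR (M + 2) ^ 2.
Proof.
elim: M => [|M IH].
  rewrite !big_ord_recr big_ord0 /= /hh /=; lra.
have -> : (M.+1 + 3 = (M + 3).+1)%N by rewrite addSn.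
have -> : INR (M.+1 + 2) = INR (M + 3) by congr INR; rewrite addSn -addnS.
have := hh_step M; move: IH.
rewrite big_ord_recr /= => h1 h2; lra.
Qed.

Lemma hh_tail (N : nat) : \big[Rplus/R0]_(t < N) hh t <= 13 / 16.
Proof.
have h1 : \big[Rplus/R0]_(t < N) hh t <= \big[Rplus/R0]_(t < N + 3) hh t.
  have := @inj_sum_le _ _ xpredT (widen_ord (leq_addr 3 N)) (fun t : 'I_(N + 3) => hh t)
           (fun _ => hh_ge0 _).
  apply => //; by move=> a b _ _ /(congr1 val) /= /val_inj.
have := hh_tail3 N.
have : 0 <= / INR (N + 2) ^ 2 by apply: Rinv_ge0; apply: pow2_ge_0.
lra.
Qed.

Definition dn (i c : nat) : nat := if (i < c)%N then (c - i)%N else (i - c)%N.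

Lemma dn_Z n (i c : 'I_(n.*2.+1)) : Z.of_nat (dn i c) = Z.abs (coordZ c - coordZ i).
Proof. rewrite /dn /coordZ; case: ltnP => h; lia. Qed.

Definition gg (t : nat) : R := / INR (maxn 2 t) ^ 4.

Lemma gg_ge0 t : 0 <= gg t.
Proof. rewrite /gg; apply: Rinv_ge0; apply: pow_le; exact: pos_INR. Qed.

Lemma count_dn N (c s : nat) :
  \big[Rplus/R0]_(j < N) (if (dn j c <= s)%N then 1 else R0) <= INR (2 * s + 1).
Proof.
rewrite -big_mkcond big_constR Rmult_1_r.
apply: le_INR; apply/leP.
pose phi (j : 'I_N) : 'I_(s.*2.+1) := inord (j + s - c).
have hinj : {in [pred j : 'I_N | (dn j c <= s)%N] &, injective phi}.
  move=> j j'; rewrite !inE /dn /phi => hj hj' /(congr1 val) /=.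
  have hj1 : (j + s - c < (s.*2).+1)%N by move: hj; case: (ltnP j c) => h; lia.
  have hj1' : (j' + s - c < (s.*2).+1)%N by move: hj'; case: (ltnP j' c) => h; lia.
  rewrite !inordK //.
  move=> e; apply: val_inj => /=; move: hj hj' e; case: (ltnP j c) => h1; case: (ltnP j' c) => h2; lia.
rewrite -(card_in_imset hinj).
apply: (leq_trans (max_card _)); rewrite card_ord; lia.
Qed.

Lemma inv_pow4_le (d k : nat) : (1 <= d)%N -> (d <= k)%N -> / INR k ^ 4 <= / INR d ^ 4.
Proof.
move=> hd hk; apply: Rinv_le_contravar.
  apply: pow_lt; apply: lt_0_INR; apply/ltP; exact: hd.
apply: pow_incr; split; first exact: pos_INR.
apply: le_INR; apply/leP; exact: hk.
Qed.

Lemma split2 m (ix : nat) (F : nat -> R) : (forall t, 0 <= F t) -> (ix < m.+1)%N ->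
  \big[Rplus/R0]_(i < m.+1) F (dn i ix) <= 2 * \big[Rplus/R0]_(t < m.+1) F t.
Proof.
move=> h0 hix.
have hdn (i : 'I_m.+1) : (dn i ix < m.+1)%N by rewrite /dn; case: (ltnP i ix); have := ltn_ord i; lia.
have e : forall P : pred 'I_m.+1, \big[Rplus/R0]_(i | P i) F (dn i ix)
              = \big[Rplus/R0]_(i | P i) F (@inord m (dn i ix)).
  by move=> P; apply: eq_bigr => i _; rewrite inordK.
rewrite (bigID (fun i : 'I_m.+1 => (i < ix)%N)) /= !e.
have h1 := @inj_sum_le _ _ (fun i : 'I_m.+1 => (i < ix)%N) (fun i => @inord m (dn i ix))
   (fun t : 'I_m.+1 => F t) (fun t => h0 t).
have h2 := @inj_sum_le _ _ (fun i : 'I_m.+1 => ~~ (i < ix)%N) (fun i => @inord m (dn i ix))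
   (fun t : 'I_m.+1 => F t) (fun t => h0 t).
have : \big[Rplus/R0]_(i : 'I_m.+1 | (i < ix)%N) F (@inord m (dn i ix)) <= \big[Rplus/R0]_(t < m.+1) F t.
  apply: h1 => i j hi0 hj0.
  have hi : (i < ix)%N := hi0; have hj : (j < ix)%N := hj0.
  move=> /(congr1 val) /=; rewrite !inordK // /dn hi hj => ee.
  apply: ord_inj; move: hi hj ee; lia.
have : \big[Rplus/R0]_(i : 'I_m.+1 | ~~ (i < ix)%N) F (@inord m (dn i ix)) <= \big[Rplus/R0]_(t < m.+1) F t.
  apply: h2 => i j hi0 hj0.
  have hi : (i < ix)%N = false := negbTE hi0; have hj : (j < ix)%N = false := negbTE hj0.
  move=> /(congr1 val) /=; rewrite !inordK // /dn hi hj => ee.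
  apply: ord_inj; move: hi hj ee; case: (ltnP i ix) => // ?; case: (ltnP j ix) => // ?; lia.
move=> hA hB.
apply: (Rle_trans _ (\big[Rplus/R0]_(t < m.+1) F t + \big[Rplus/R0]_(t < m.+1) F t)).
  by apply: Rplus_le_compat; assumption.
have E : forall a : R, a + a = 2 * a by move=> a; lra.
rewrite E; exact: Rle_refl.
Qed.

Lemma half_bound m (ix jx : nat) : (ix < m.+1)%N ->
  \big[Rplus/R0]_(i < m.+1) \big[Rplus/R0]_(j < m.+1)
     (if (dn j jx <= dn i ix)%N then gg (dn i ix) else R0) <= 13 / 8.
Proof.
move=> hix.
apply: (Rle_trans _ (\big[Rplus/R0]_(i < m.+1) hh (dn i ix))).
  apply: Rle_big => i _.
  have -> : \big[Rplus/R0]_(j < m.+1) (if (dn j jx <= dn i ix)%N then gg (dn i ix) else R0)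
          = gg (dn i ix) * \big[Rplus/R0]_(j < m.+1) (if (dn j jx <= dn i ix)%N then 1 else R0).
    rewrite big_distrr /=; apply: eq_bigr => j _; case: ifP => _; lra.
  rewrite /hh -/(gg _) Rmult_comm.
  apply: Rmult_le_compat_r; first exact: gg_ge0.
  exact: count_dn.
have := split2 hh_ge0 hix; have := hh_tail m.+1; lra.
Qed.

Lemma K0bound n (x : V n) (D : V n -> nat) :
  (forall b, Z.abs (X1 x - X1 b) <= Z.of_nat (D b) /\ Z.abs (X2 x - X2 b) <= Z.of_nat (D b))%Z ->
  \big[Rplus/R0]_(b | (2 <= D b)%N) / INR (D b) ^ 4 <= 13 / 2.
Proof.
move=> hD.
set ix : 'I_(n.*2.+1) := (val x).1.1.
set jx : 'I_(n.*2.+1) := (val x).1.2.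
pose gfun (i j : 'I_(n.*2.+1)) := / INR (maxn 2 (maxn (dn i ix) (dn j jx))) ^ 4.
have gfun_ge0 i j : 0 <= gfun i j by rewrite /gfun; apply: Rinv_ge0; apply: pow_le; exact: pos_INR.
apply: (Rle_trans _ (\big[Rplus/R0]_(b : V n) gfun (val b).1.1 (val b).1.2)).
  apply: (Rle_trans _ (\big[Rplus/R0]_(b | (2 <= D b)%N) gfun (val b).1.1 (val b).1.2)).
    apply: Rle_big => b hb; rewrite /gfun; apply: inv_pow4_le.
      by rewrite leq_max.
    have [h1 h2] := hD b.
    have e1 := dn_Z (val b).1.1 ix; have e2 := dn_Z (val b).1.2 jx.
    rewrite /X1 /X2 /Defs.c1 /c2 in h1 h2.
    rewrite -/ix -/jx in h1 h2.
    rewrite !geq_max hb /=; apply/andP; split; apply/leP; apply/Nat2Z.inj_le.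
      by rewrite e1.
    by rewrite e2.
  by apply: big_sub_le.
pose phi (b : V n) : ('I_(n.*2.+1) * 'I_(n.*2.+1)) * bool :=
  (((val b).1.1, (val b).1.2), Z.leb 0 (X3 b)).
have hphi : {in xpredT &, injective phi}.
  move=> b b' _ _ [e1 e2 e3].
  have hb := onV_X b; have hb' := onV_X b'.
  have f1 : X1 b = X1 b' by rewrite /X1 /Defs.c1 e1.
  have f2 : X2 b = X2 b' by rewrite /X2 /c2 e2.
  apply: V_eq => //.
  move: e3 hb hb'; rewrite f1 f2.
  case: (Z.leb_spec 0 (X3 b)); case: (Z.leb_spec 0 (X3 b')) => // ? ? _; lia.
have := @inj_sum_le _ _ xpredT phi (fun p => gfun p.1.1 p.1.2) (fun p => gfun_ge0 _ _) hphi.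
move=> hstep2; apply: (Rle_trans _ _ _ hstep2).
rewrite -(pair_bigA _ (fun ij (beta : bool) => gfun ij.1 ij.2)) /=.
rewrite -(pair_bigA _ (fun i j => \big[Rplus/R0]_(beta : bool) gfun i j)) /=.
have -> : \big[Rplus/R0]_(i < n.*2.+1) \big[Rplus/R0]_(j < n.*2.+1) \big[Rplus/R0]_(beta : bool) gfun i j
        = 2 * \big[Rplus/R0]_(i < n.*2.+1) \big[Rplus/R0]_(j < n.*2.+1) gfun i j.
  rewrite big_distrr; apply: eq_bigr => i _; rewrite big_distrr; apply: eq_bigr => j _.
  rewrite big_bool /=; lra.
apply: (Rle_trans _ (2 * (\big[Rplus/R0]_(i < n.*2.+1) \big[Rplus/R0]_(j < n.*2.+1)
     (if (dn j jx <= dn i ix)%N then gg (dn i ix) else R0)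
   + \big[Rplus/R0]_(j < n.*2.+1) \big[Rplus/R0]_(i < n.*2.+1)
     (if (dn i ix <= dn j jx)%N then gg (dn j jx) else R0)))).
  apply: Rmult_le_compat_l; first lra.
  rewrite [X in _ <= _ + X]exchange_big /= -big_split /=.
  apply: Rle_big => i _; rewrite -big_split /=; apply: Rle_big => j _.
  rewrite /gfun /gg; case: (leqP (dn j jx) (dn i ix)) => h.
    case: ifP => _; last lra.
    have := Rinv_ge0 (pow_le (INR (maxn 2 (dn j jx))) 4 (pos_INR _)); lra.
  rewrite ifT; last exact: ltnW h.
  lra.
have := @half_bound n.*2 ix jx (ltn_ord ix).
have := @half_bound n.*2 jx ix (ltn_ord jx).
move=> hA hB.
apply: (Rle_trans _ (2 * (13 / 8 + 13 / 8))); last lra.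
apply: Rmult_le_compat_l; first lra.
by apply: Rplus_le_compat.
Qed.

Definition prof (z : Z) : nat := if Z.ltb z 0 then 0%N else if Z.eqb z 0 then 1%N else 2%N.

Definition ef (p d : nat) : Z :=
  if p == 0%N then (if d == 0%N then 1%Z else if d == 1%N then 0%Z else (-1)%Z)
  else if p == 1%N then (if d == 0%N then 1%Z else if d == 1%N then 0%Z else 1%Z)
  else (if d == 0%N then (-1)%Z else if d == 1%N then 0%Z else 1%Z).

Definition Ppred (p1 p2 p3 : nat) : pred ('I_3 * 'I_3 * 'I_3) :=
  fun t => (t != (@Ordinal 3 1 isT, @Ordinal 3 1 isT, @Ordinal 3 1 isT) :> 'I_3 * 'I_3 * 'I_3) &&
           Z.eqb (ef p1 t.1.1 + ef p2 t.1.2 + ef p3 t.2)%Z 0%Z.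

Lemma card_prof p1 p2 p3 : (p1 < 3)%N -> (p2 < 3)%N -> (p3 < 3)%N ->
  (#|[pred t | Ppred p1 p2 p3 t]| <= 6)%N.
Proof.
move=> h1 h2 h3.
rewrite -sum1_card.
have -> : (\sum_(t in [pred t | Ppred p1 p2 p3 t]) 1 =
   \sum_(i < 3) \sum_(j < 3) \sum_(k < 3) (if Ppred p1 p2 p3 ((i, j), k) then 1 else 0))%N.
  rewrite pair_bigA pair_bigA big_mkcond /=; apply: eq_bigr => [[[i j] k]] _ //.
rewrite !big_ord_recr !big_ord0 /=.
move: h1 h2 h3.
case: p1 => [|[|[|p1]]] // _; case: p2 => [|[|[|p2]]] // _; case: p3 => [|[|[|p3]]] // _;
  vm_compute; reflexivity.
Qed.

Lemma prof_lt3 z : (prof z < 3)%N.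
Proof. by rewrite /prof; case: (Z.ltb z 0); case: (Z.eqb z 0). Qed.

Lemma ef_spec z dl : (Z.abs dl <= 1)%Z ->
  ef (prof z) (Z.to_nat (dl + 1)) = (Z.abs (z + dl) - Z.abs z)%Z.
Proof.
move=> hd.
have [->|[->|->]] : (dl = -1 \/ dl = 0 \/ dl = 1)%Z by lia.
all: rewrite /prof /=; case: (Z.ltb_spec z 0) => h1; case: (Z.eqb_spec z 0) => h2; rewrite /ef /=; lia.
Qed.

Definition dI (z : Z) : 'I_3 := inord (Z.to_nat (z + 1)).

Lemma dI_val z : (Z.abs z <= 1)%Z -> nat_of_ord (dI z) = Z.to_nat (z + 1).
Proof. move=> h; rewrite /dI inordK //; lia. Qed.

Lemma deg6 n (u : V n) : (#|[pred a | adj u a]| <= 6)%N.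
Proof.
pose phi (a : V n) : 'I_3 * 'I_3 * 'I_3 :=
  ((dI (X1 a - X1 u), dI (X2 a - X2 u)), dI (X3 a - X3 u)).
have hinj : {in [pred a | adj u a] &, injective phi}.
  move=> a a'; rewrite !inE => /adj_sym /adjP [_ [ha1 [ha2 ha3]]] /adj_sym /adjP [_ [hb1 [hb2 hb3]]].
  rewrite /phi => [[/(congr1 val) e1 /(congr1 val) e2 /(congr1 val) e3]].
  move: e1 e2 e3; rewrite /= !dI_val; try lia.
  move=> e1 e2 e3; apply: V_eq; lia.
rewrite -(card_in_imset hinj).
apply: (leq_trans _ (@card_prof (prof (X1 u)) (prof (X2 u)) (prof (X3 u))
          (prof_lt3 _) (prof_lt3 _) (prof_lt3 _))).
apply: subset_leq_card; apply/subsetP => t /imsetP [a]; rewrite inE => ha ->.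
have hu := onV_X u; have ha' := onV_X a.
move/adj_sym: (ha) => /adjP [hne [h1 [h2 h3]]].
rewrite inE /Ppred; apply/andP; split.
  apply/negP => /eqP [/(congr1 val) e1 /(congr1 val) e2 /(congr1 val) e3].
  move: e1 e2 e3; rewrite /= !dI_val; try lia.
  move=> e1 e2 e3; apply: hne; apply: V_eq; lia.
rewrite /phi /= !dI_val; try lia.
rewrite !ef_spec; lia.
Qed.

Lemma amgm (d1 d2 : R) : d1 <> 0 -> d2 <> 0 ->
  / d1 ^ 2 * / d2 ^ 2 <= (/ d1 ^ 4 + / d2 ^ 4) / 2.
Proof.
move=> h1 h2.
have e1 : / d1 ^ 4 = / d1 ^ 2 * / d1 ^ 2 by field.
have e2 : / d2 ^ 4 = / d2 ^ 2 * / d2 ^ 2 by field.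
rewrite e1 e2.
set p := / d1 ^ 2; set q := / d2 ^ 2.
have h := Rle_0_sqr (p - q); rewrite /Rsqr in h.
nra.
Qed.

Lemma inner_bound n (u a : V n) (L : R) : 0 < L -> (forall x : V n, L <= SS x) ->
  \big[Rplus/R0]_(b | good u a b) (pchoose a b * pchoose b u) <= 13 / 2 * / L ^ 2.
Proof.
move=> hL hS.
have hZ (x : V n) : Zu x <= / L.
  by change (/ SS x <= / L); apply: Rinv_le_contravar; [exact: hL | exact: (hS x)].
have hZ0 := @Zu_ge0 n.
have hLi : 0 < / L by apply: Rinv_0_lt_compat.
pose f1 (b : V n) := / INR (Defs.dist a b) ^ 4.
pose f2 (b : V n) := / INR (Defs.dist b u) ^ 4.
apply: (Rle_trans _ (\big[Rplus/R0]_(b | good u a b) (/ L ^ 2 / 2 * f1 b + / L ^ 2 / 2 * f2 b))).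
  apply: (@Rle_big _ (fun b => good u a b)) => b /and4P [hab hbu hd1 hd2].
  rewrite /pchoose.
  have -> : (b == a) = false by apply/negbTE; rewrite eq_sym.
  have -> : (u == b) = false by apply/negbTE; rewrite eq_sym.
  have hd1' : INR (Defs.dist a b) <> 0 by apply: not_0_INR; move=> e; rewrite e in hd1.
  have hd2' : INR (Defs.dist b u) <> 0 by apply: not_0_INR; move=> e; rewrite e in hd2.
  have am := amgm hd1' hd2'.
  have p1 : 0 <= / INR (Defs.dist a b) ^ 2 by apply: Rinv_ge0; apply: pow2_ge_0.
  have p2 : 0 <= / INR (Defs.dist b u) ^ 2 by apply: Rinv_ge0; apply: pow2_ge_0.
  have hp : Zu a * / INR (Defs.dist a b) ^ 2 * (Zu b * / INR (Defs.dist b u) ^ 2)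
          <= (/ L * / L) * (/ INR (Defs.dist a b) ^ 2 * / INR (Defs.dist b u) ^ 2).
    have -> : Zu a * / INR (Defs.dist a b) ^ 2 * (Zu b * / INR (Defs.dist b u) ^ 2)
            = (Zu a * Zu b) * (/ INR (Defs.dist a b) ^ 2 * / INR (Defs.dist b u) ^ 2) by ring.
    apply: Rmult_le_compat_r; first by apply: Rmult_le_pos.
    apply: Rmult_le_compat; [exact: hZ0 | exact: hZ0 | exact: hZ | exact: hZ].
  have hLL : / L * / L = / L ^ 2 by field; lra.
  rewrite hLL in hp.
  have hL2 : 0 <= / L ^ 2 by rewrite -hLL; apply: Rmult_le_pos; lra.
  have := Rmult_le_compat_l _ _ _ hL2 am.
  rewrite /f1 /f2; lra.
have -> : \big[Rplus/R0]_(b | good u a b) (/ L ^ 2 / 2 * f1 b + / L ^ 2 / 2 * f2 b)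
  = / L ^ 2 / 2 * \big[Rplus/R0]_(b | good u a b) f1 b + / L ^ 2 / 2 * \big[Rplus/R0]_(b | good u a b) f2 b.
  by rewrite big_split -!big_distrr.
have K1 : \big[Rplus/R0]_(b | good u a b) f1 b <= 13 / 2.
  apply: (Rle_trans _ (\big[Rplus/R0]_(b | (2 <= Defs.dist a b)%N) f1 b)).
    apply: big_sub_le; first by move=> b _; apply: Rinv_ge0; apply: pow_le; exact: pos_INR.
    by move=> b /and4P [].
  apply: (@K0bound n a (fun b => Defs.dist a b)) => b.
  have [h1 [h2 _]] := dV_ge a b; lia.
have K2 : \big[Rplus/R0]_(b | good u a b) f2 b <= 13 / 2.
  apply: (Rle_trans _ (\big[Rplus/R0]_(b | (2 <= Defs.dist b u)%N) f2 b)).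
    apply: big_sub_le; first by move=> b _; apply: Rinv_ge0; apply: pow_le; exact: pos_INR.
    by move=> b /and4P [].
  apply: (@K0bound n u (fun b => Defs.dist b u)) => b.
  have [h1 [h2 _]] := dV_ge b u; lia.
have hL2 : 0 <= / L ^ 2 / 2.
  apply: Rmult_le_pos; last lra.
  apply: Rinv_ge0; apply: pow2_ge_0.
have := Rmult_le_compat_l _ _ _ hL2 K1; have := Rmult_le_compat_l _ _ _ hL2 K2.
move=> ? ?; lra.
Qed.

Lemma zeta_lb z : zeta3_is z -> 9 / 8 <= z.
Proof.
move=> hz.
set s := fun N => sum_f_R0 (fun i => Rinv (pow (INR i.+1) 3)) N.
have hs1 : s 1%N = 9 / 8 by rewrite /s /=; field.
have hmono : forall N, s 1%N <= s (N.+1).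
  elim=> [|N IH]; first lra.
  have : 0 <= / INR N.+3 ^ 3 by apply: Rinv_ge0; apply: pow_le; exact: pos_INR.
  rewrite /s /= in IH *; lra.
apply: Rnot_lt_le => hlt.
have [N0 hN] := hz (9 / 8 - z) ltac:(lra).
have := hN N0.+1 (leP (leqW (leqnn N0))).
rewrite /R_dist.
have := hmono N0; rewrite hs1 /s.
move=> h1 h2.
have := Rle_abs (sum_f_R0 (fun i : nat => / INR i.+1 ^ 3) N0.+1 - z).
lra.
Qed.

Unset Implicit Arguments.

Theorem lemma7 (n : nat) (hn : (0 < n)%N) (u : V n) (z : R) (hz : zeta3_is z) :
  Rlt (Pr (E3 u)) (Rdiv (Rmult (IZR 36) z) (pow (ln (Rplus (INR n) R1)) 2)).
Proof.
have hn1 : 1 <= INR n by apply: (le_INR 1 n); apply/leP.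
have hL : 0 < ln (INR n + 1).
  rewrite -ln_1; apply: ln_increasing; lra.
have hS : forall x : V n, ln (INR n + 1) <= SS x by move=> x; exact: SS_lb.
set L := ln (INR n + 1) in hL hS.
have -> : ln (Rplus (INR n) R1) = L by [].
have hz' := zeta_lb hz.
have hc : 0 < / L ^ 2 by apply: Rinv_0_lt_compat; apply: pow_lt.
have h1 := Pr_le u.
have h2 : \big[Rplus/R0]_(a | adj u a) \big[Rplus/R0]_(b | good u a b) (pchoose a b * pchoose b u)
          <= \big[Rplus/R0]_(a | adj u a) (13 / 2 * / L ^ 2).
  apply: Rle_big => a _; exact: inner_bound.
rewrite big_constR in h2.
have h3 : INR #|[pred i | adj u i]| <= 6.
  have := le_INR _ _ (elimT leP (deg6 u)); rewrite /=; lra.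
have h4 : INR #|[pred i | adj u i]| * (13 / 2 * / L ^ 2) <= 6 * (13 / 2 * / L ^ 2).
  apply: Rmult_le_compat_r => //; lra.
have h5 : 39 * / L ^ 2 < IZR 36 * z * / L ^ 2.
  apply: Rmult_lt_compat_r => //; lra.
rewrite /Rdiv; lra.
Qed.
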